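(* Let $G'$ be a connected graph, let $w$ be a vertex of $G'$, let $k\ge 2$, and let $G$ be obtained from $G'$ by adding $k$ new vertices, each adjacent only to $w$. Let $\Delta$ be the distance squared matrix of $G$ and $\Delta_{k+1}$ the distance squared matrix of $G'$. Then either $i_-(\Delta)=k-1+i_-(\Delta_{k+1})$ or $i_-(\Delta)=k+i_-(\Delta_{k+1})$.
   Context: For a connected graph $G$ with vertices $1,\dots,n$, the distance squared matrix $\Delta$ is the $n\times n$ matrix with $(i,j)$ entry $d_{ij}^2$, where $d_{ij}$ is the graph distance between $i$ and $j$. For a real symmetric matrix $M$, $i_-(M)$ denotes the number of negative eigenvalues of $M$ counted with multiplicity. *)

(* Defs.v *)
From mathcomp Require Import all_boot all_order all_algebra.
From mathcomp Require Import polyrcf.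
From mathcomp Require Import reals.
Set Implicit Arguments. Unset Strict Implicit. Unset Printing Implicit Defensive.
Import Order.TTheory GRing.Theory Num.Theory.
Local Open Scope ring_scope.

Definition simple_graph n (e : rel 'I_n) := symmetric e /\ irreflexive e.
Definition connected_graph n (e : rel 'I_n) := forall i j, connect e i j.

Fixpoint reach_le n (e : rel 'I_n) (m : nat) (i j : 'I_n) : bool :=
  if m is m'.+1 then reach_le e m' i j || [exists l, reach_le e m' i l && e l j]
  else i == j.

(* Graph distance: the least m < n with a walk of length <= m from i to j
   (for a connected graph on n vertices this is the usual distance). *)
Definition gdist n (e : rel 'I_n) (i j : 'I_n) : nat :=
  find (fun m => reach_le e m i j) (iota 0 n).

Definition dist_sq_mx (R : nzRingType) n (e : rel 'I_n) : 'M[R]_n :=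
  \matrix_(i, j) ((gdist e i j) ^ 2)%:R.

(* i_-(M): number of negative eigenvalues counted with multiplicity, i.e.
   the sum of the multiplicities of the negative real roots of the
   characteristic polynomial (all eigenvalues of a real symmetric matrix
   are real). *)
Definition neg_inertia (R : rcfType) n (M : 'M[R]_n) : nat :=
  \sum_(x <- rootsR (char_poly M) | x < 0) mup x (char_poly M).

(* G obtained from G' (on 'I_n) by adding k new vertices (indices
   rshift n _ in 'I_(n + k)), each adjacent only to w. *)
Definition add_pendants n (e : rel 'I_n) (w : 'I_n) (k : nat) : rel 'I_(n + k) :=
  fun x y =>
    match split x, split y with
    | inl a, inl b => e a b
    | inl a, inr _ => a == w
    | inr _, inl b => b == w
    | inr _, inr _ => false
    end.
Arguments add_pendants [n] e w k _ _.
Arguments dist_sq_mx R [n] e.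

(* Main.v *)
Require Import Defs.
From mathcomp Require Import all_boot all_order all_algebra.
From mathcomp Require Import reals.
From mathcomp Require Import polyrcf complex sesquilinear spectral zify.
Set Implicit Arguments. Unset Strict Implicit. Unset Printing Implicit Defensive.

Section Reach.
Variables (N : nat) (E : rel 'I_N).

Lemma reach_mono m m' i j : (m <= m')%N -> reach_le E m i j -> reach_le E m' i j.
Proof.
move=> le; elim: m' le => [|m' IH]; first by rewrite leqn0 => /eqP->.
rewrite leq_eqVlt => /orP[/eqP->//|lt] h /=.
by rewrite (IH lt h).
Qed.

Lemma reach_step m i l j : reach_le E m i l -> E l j -> reach_le E m.+1 i j.
Proof. by move=> h1 h2 /=; apply/orP; right; apply/existsP; exists l; rewrite h1. Qed.

Lemma reach_pre m h i j : E h i -> reach_le E m i j -> reach_le E m.+1 h j.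
Proof.
move=> hi; elim: m j => [|m IH] j /=.
  by move=> /eqP<-; apply/orP; right; apply/existsP; exists h; rewrite eqxx.
case/orP=> [r|/existsP[l /andP[r el]]].
  by apply/orP; left; apply: IH.
exact: reach_step (IH _ r) el.
Qed.

Lemma reach_sym m i j : symmetric E -> reach_le E m i j -> reach_le E m j i.
Proof.
move=> sE; elim: m i j => [|m IH] i j /=; first by rewrite eq_sym.
case/orP=> [r|/existsP[l /andP[r el]]].
  by apply/orP; left; apply: IH.
by apply: reach_pre (IH _ _ r); rewrite sE.
Qed.

Lemma reach_path x p : path E x p -> reach_le E (size p) x (last x p).
Proof.
elim: p x => [|y p IH] x /=; first by [].
by case/andP=> exy pp; apply: reach_pre exy (IH _ pp).
Qed.

Lemma connect_has a b : connect E a b -> has (fun m => reach_le E m a b) (iota 0 N).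
Proof.
move=> /connectP[p pp ->].
case: (shortenP pp) => p' pp' up' _.
apply/hasP; exists (size p'); last exact: reach_path.
rewrite mem_iota /=.
have := max_card (mem (a :: p')); rewrite (card_uniqP _) // card_ord /=.
by [].
Qed.

Lemma gdist_sym i j : symmetric E -> gdist E i j = gdist E j i.
Proof.
move=> sE; rewrite /gdist; apply: eq_find => m.
by apply/idP/idP; apply: reach_sym.
Qed.

Lemma gdist_refl i : gdist E i i = 0%N.
Proof.
rewrite /gdist; case: N E i => [|N'] E' i; first by case: i.
by rewrite /= eqxx.
Qed.

End Reach.

Lemma find_iota2 (P : pred nat) N : (2 < N)%N -> ~~ P 0%N -> ~~ P 1%N -> P 2%N ->
  find P (iota 0 N) = 2%N.
Proof.
case: N => [|[|[|N]]] //= _ h0 h1 h2.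
by rewrite (negbTE h0) (negbTE h1) h2.
Qed.

Section Pendants.
Variables (n k : nat) (e : rel 'I_n) (w : 'I_n).
Local Notation G := (add_pendants e w k).

Definition proj (x : 'I_(n + k)) : 'I_n :=
  match split x with inl a => a | inr _ => w end.
Definition isp (x : 'I_(n + k)) : nat :=
  match split x with inl _ => 0%N | inr _ => 1%N end.

Lemma split_l (a : 'I_n) : split (lshift k a) = inl a.
Proof. exact: (unsplitK (inl _ a)). Qed.
Lemma split_r (j : 'I_k) : split (rshift n j) = inr j.
Proof. exact: (unsplitK (inr _ j)). Qed.

Lemma G_sym : symmetric e -> symmetric G.
Proof.
move=> sE x y; rewrite /add_pendants.
case: (split x) => [a|ja]; case: (split y) => [b|jb] //.
Qed.

Lemma reach_fwd m a y : reach_le G m (lshift k a) y ->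
  (isp y <= m)%N /\ reach_le e (m - isp y) a (proj y).
Proof.
elim: m y => [|m IH] y /=.
  by move=> /eqP<-; rewrite /isp /proj split_l /=.
case/orP=> [r|/existsP[l /andP[r el]]].
  have [h1 h2] := IH _ r; split; first by apply: leqW.
  by apply: reach_mono h2; lia.
have [h1 h2] := IH _ r; move: h1 h2 el.
rewrite /isp /proj /add_pendants.
case: (split l) => [l'|jl]; case: (split y) => [y'|jy] //= h1 h2 el.
- split=> //; rewrite subn0 in h2; apply/orP; right; apply/existsP; exists l'.
  by rewrite h2 el.
- by split=> //; rewrite subn1 /=; rewrite subn0 (eqP el) in h2.
- split=> //; rewrite (eqP el); apply/orP; left; apply: reach_mono h2; lia.
Qed.

Lemma reach_bwd m a b : reach_le e m a b -> reach_le G m (lshift k a) (lshift k b).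
Proof.
elim: m b => [|m IH] b /=; first by move=> /eqP->.
case/orP=> [r|/existsP[l /andP[r el]]]; first by rewrite IH.
apply: reach_step (IH _ r) _.
by rewrite /add_pendants !split_l.
Qed.

Lemma reach_ll m a b : reach_le G m (lshift k a) (lshift k b) = reach_le e m a b.
Proof.
apply/idP/idP; last exact: reach_bwd.
by move=> /reach_fwd; rewrite /isp /proj split_l subn0 => -[].
Qed.

Lemma reach_lr m a j : reach_le G m (lshift k a) (rshift n j) =
  (0 < m)%N && reach_le e m.-1 a w.
Proof.
apply/idP/idP.
  by move=> /reach_fwd; rewrite /isp /proj split_r subn1 => -[->].
case: m => [//|m] /= r.
apply: reach_step (reach_bwd r) _.
by rewrite /add_pendants split_l split_r.
Qed.

Lemma gdist_ll a b : connected_graph e ->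
  gdist G (lshift k a) (lshift k b) = gdist e a b.
Proof.
move=> ce; rewrite /gdist iotaD find_cat.
rewrite (eq_has (a2 := fun m => reach_le e m a b)); last by move=> m; rewrite reach_ll.
rewrite connect_has //.
by apply: eq_find => m; rewrite reach_ll.
Qed.

Lemma gdist_lr a j j' : gdist G (lshift k a) (rshift n j) = gdist G (lshift k a) (rshift n j').
Proof. by rewrite /gdist; apply: eq_find => m; rewrite !reach_lr. Qed.

Lemma gdist_rr j j' : (2 <= k)%N -> j != j' -> gdist G (rshift n j) (rshift n j') = 2%N.
Proof.
move=> k2 jj; rewrite /gdist; apply: find_iota2.
- by case: w => w' /= ?; lia.
- by rewrite /= (inj_eq (@rshift_inj _ _)).
- rewrite /= (inj_eq (@rshift_inj _ _)) (negbTE jj) /=.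
  apply/existsP => -[l /andP[/eqP <- ]].
  by rewrite /add_pendants !split_r.
- apply: (@reach_step _ _ 1%N _ (lshift k w)).
    apply: (@reach_step _ _ 0%N _ (rshift n j)) => //=.
    by rewrite /add_pendants split_r split_l.
  by rewrite /add_pendants split_r split_l.
Qed.

End Pendants.

Import Order.TTheory GRing.Theory Num.Theory.
Local Open Scope ring_scope.

Section PartA.
Variable C : numClosedFieldType.
Local Open Scope sesquilinear_scope.

Definition form N (x : 'rV[C]_N) (H : 'M[C]_N) : C := (x *m H *m x ^t*) 0 0.
Definition Nneg N (H : 'M[C]_N) : nat := #|[set i | spectral_diag H 0 i < 0]|.

Lemma sum_delta N (a : 'I_N) (f : 'I_N -> C) : \sum_i f i * (i == a)%:R = f a.
Proof.
rewrite (bigD1 a) //= eqxx mulr1 big1 ?addr0 // => i /negbTE ->.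
by rewrite mulr0.
Qed.

Lemma ct_mul m n p (A : 'M[C]_(m, n)) (B : 'M[C]_(n, p)) : (A *m B)^t* = B^t* *m A^t*.
Proof. by rewrite trmx_mul map_mxM. Qed.

Lemma form_spec N (H : 'M[C]_N) (x : 'rV[C]_N) : H \is hermsymmx ->
  form x H = \sum_i spectral_diag H 0 i *
     ((x *m (spectralmx H)^t*) 0 i * ((x *m (spectralmx H)^t*) 0 i)^*).
Proof.
move=> Hh; have /hermitian_normalmx /orthomx_spectralP HE := Hh.
rewrite /form {1}HE invmx_unitary ?spectral_unitarymx //.
set P := spectralmx H; set d := spectral_diag H.
have -> : x *m (P^t* *m diag_mx d *m P) *m x^t* =
   (x *m P^t*) *m diag_mx d *m (x *m P^t*)^t*.
  by rewrite ct_mul trmxCK !mulmxA.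
rewrite mxE; apply: eq_bigr => i _.
by rewrite mul_mx_diag !mxE mulrAC mulrC mulrA.
Qed.

Lemma spec_real N (H : 'M[C]_N) i : H \is hermsymmx -> spectral_diag H 0 i \is Num.real.
Proof. by move=> /hermitian_spectral_diag_real /mxOverP; apply. Qed.

Definition selmx N (S : {set 'I_N}) : 'M[C]_(#|S|, N) :=
  \matrix_(j, i) (i == enum_val j)%:R.

Lemma ker_nz m p (M : 'M[C]_(m, p)) : (p < m)%N -> exists2 u : 'rV_m, u != 0 & u *m M = 0.
Proof.
move=> pm.
have Kn0 : kermx M != 0.
  rewrite -mxrank_eq0 mxrank_ker; have := rank_leq_col M; lia.
case: (pickP (fun i => row i (kermx M) != 0)) => [i Hi|H0].
  exists (row i (kermx M)) => //; apply/sub_kermxP; exact: row_sub.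
case/negP: Kn0; apply/eqP/row_matrixP => i; rewrite row0.
by have := H0 i => /= /negbFE /eqP.
Qed.

Lemma neg_sub_exists N (H : 'M[C]_N) : H \is hermsymmx ->
  exists U : 'M[C]_(Nneg H, N), forall u : 'rV_(Nneg H), u != 0 -> form (u *m U) H < 0.
Proof.
move=> Hh; set S := [set i | spectral_diag H 0 i < 0].
exists (selmx S *m spectralmx H) => u un0.
rewrite form_spec // -!mulmxA.
have /unitarymxP -> := spectral_unitarymx H; rewrite mulmx1.
set d := spectral_diag H.
have yE i : (u *m selmx S) 0 i = \sum_j u 0 j * (i == enum_val j)%:R.
  by rewrite mxE; apply: eq_bigr => j _; rewrite mxE.
have [j0 uj0] : exists j0, u 0 j0 != 0.
  case: (pickP (fun j => u 0 j != 0)) => [j Hj|H0]; first by exists j.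
  by case/negP: un0; apply/eqP/rowP => j; rewrite mxE; have := H0 j => /= /negbFE /eqP.
set i0 := enum_val j0.
have yi0 : (u *m selmx S) 0 i0 = u 0 j0.
  rewrite yE -[RHS](sum_delta j0 (fun j => u 0 j)); apply: eq_bigr => j _.
  by rewrite /i0 (inj_eq enum_val_inj) eq_sym.
have yS i : i \notin S -> (u *m selmx S) 0 i = 0.
  move=> iS; rewrite yE big1 // => j _.
  have : enum_val j \in S by apply: enum_valP.
  case: eqP => [eij|_]; last by rewrite mulr0.
  by rewrite -eij (negbTE iS).
have di0 : d 0 i0 < 0 by have := enum_valP j0; rewrite inE.
rewrite (bigD1 i0) //=.
rewrite -[X in _ < X](addr0 0); apply: ltr_leD.
  by rewrite nmulr_rlt0 // yi0 mul_conjC_gt0.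
rewrite -oppr_ge0 -sumrN; apply: sumr_ge0 => i _; rewrite oppr_ge0.
case: (boolP (i \in S)) => iS.
  apply: mulr_le0_ge0; last exact: mul_conjC_ge0.
  by apply: ltW; move: iS; rewrite inE.
by rewrite yS // mul0r mulr0.
Qed.

Lemma neg_sub_le N (H : 'M[C]_N) m (U : 'M[C]_(m, N)) : H \is hermsymmx ->
  (forall u : 'rV_m, u != 0 -> form (u *m U) H < 0) -> (m <= Nneg H)%N.
Proof.
move=> Hh Uneg; rewrite leqNgt; apply/negP => lt.
set S := [set i | spectral_diag H 0 i < 0].
have [u un0 uV] := ker_nz (U *m (spectralmx H)^t* *m (selmx S)^T) lt.
have := Uneg u un0; rewrite form_spec //.
set y := u *m U *m _.
have yS i : i \in S -> y 0 i = 0.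
  move=> iS; move/matrixP: (uV) => /(_ 0 (enum_rank_in iS i)) h.
  rewrite !mulmxA -/y !mxE in h.
  rewrite -[LHS](sum_delta i (fun j => y 0 j)) -[RHS]h; apply: eq_bigr => j _.
  by rewrite !mxE enum_rankK_in.
move=> hlt; suff hge : 0 <= \sum_i spectral_diag H 0 i * (y 0 i * (y 0 i)^*).
  by have := lt_le_trans hlt hge; rewrite ltxx.
apply: sumr_ge0 => i _.
case: (boolP (i \in S)) => iS; first by rewrite yS // mul0r mulr0.
apply: mulr_ge0; last exact: mul_conjC_ge0.
move: iS; rewrite inE -real_leNgt ?real0 //; exact: spec_real.
Qed.


Lemma addmx00 m n (A B : 'M[C]_(m.+1, n.+1)) : (A + B) 0 0 = A 0 0 + B 0 0.
Proof. by rewrite mxE. Qed.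

Lemma form_block n1 n2 (a : 'rV[C]_n1) (b : 'rV[C]_n2) (A : 'M[C]_(n1 + n2)) :
  form (row_mx a b) A = form a (ulsubmx A) + (b *m dlsubmx A *m a^t*) 0 0 +
    ((a *m ursubmx A *m b^t*) 0 0 + form b (drsubmx A)).
Proof.
rewrite /form -{1}(submxK A) mul_row_block tr_row_mx map_col_mx mul_row_col.
rewrite !mulmxDl !addmx00.
by [].
Qed.

Lemma sum_delta1 N (a : 'I_N) : \sum_i ((i == a)%:R : C) = 1.
Proof. by rewrite -[RHS](sum_delta a (fun _ => 1)); apply: eq_bigr => i _; rewrite mul1r. Qed.

Lemma rV_nz N (u : 'rV[C]_N) : u != 0 -> exists j, u 0 j != 0.
Proof.
move=> un0; case: (pickP (fun j => u 0 j != 0)) => [j Hj|H0]; first by exists j.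
by case/negP: un0; apply/eqP/rowP => j; rewrite mxE; have := H0 j => /= /negbFE /eqP.
Qed.

Lemma ct0 m n : (0 : 'M[C]_(m, n))^t* = 0.
Proof. by apply/matrixP => i j; rewrite !mxE rmorph0. Qed.

Lemma form0 N (A : 'M[C]_N) : form 0 A = 0.
Proof. by rewrite /form !mul0mx mxE. Qed.

Lemma dlE m1 m2 n1 n2 (A : 'M[C]_(m1 + m2, n1 + n2)) i j :
  dlsubmx A i j = A (rshift m1 i) (lshift n2 j).
Proof. by rewrite /dlsubmx !mxE. Qed.
Lemma urE m1 m2 n1 n2 (A : 'M[C]_(m1 + m2, n1 + n2)) i j :
  ursubmx A i j = A (lshift m2 i) (rshift n1 j).
Proof. by rewrite /ursubmx !mxE. Qed.
Lemma drE m1 m2 n1 n2 (A : 'M[C]_(m1 + m2, n1 + n2)) i j :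
  drsubmx A i j = A (rshift m1 i) (rshift n1 j).
Proof. by rewrite /drsubmx !mxE. Qed.

Lemma inertia_pendant n k' (H : 'M[C]_(n + k'.+1)) (c : C) :
  H \is hermsymmx -> ulsubmx H \is hermsymmx -> 0 < c ->
  (forall i j j', H (lshift _ i) (rshift n j) = H (lshift _ i) (rshift n j')) ->
  (forall i j j', H (rshift n j) (lshift _ i) = H (rshift n j') (lshift _ i)) ->
  (forall j j', H (rshift n j) (rshift n j') = if j == j' then 0 else c) ->
  (Nneg (ulsubmx H) + k' <= Nneg H)%N /\ (Nneg H <= Nneg (ulsubmx H) + k'.+1)%N.
Proof.
move=> hH hH' c0 hl hr hrr; split.
  have [U' hU'] := neg_sub_exists hH'.
  pose Wk : 'M[C]_(k', k'.+1) := \matrix_(j, i) ((i == ord0)%:R - (i == lift ord0 j)%:R).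
  apply: (neg_sub_le (U := col_mx (row_mx U' 0) (row_mx 0 Wk))) => // u un0.
  rewrite -(hsubmxK u) mul_row_col !mul_mx_row !mulmx0 add_row_mx addr0 add0r.
  set u1 := lsubmx u; set u2 := rsubmx u; set a := u1 *m U'; set b := u2 *m Wk.
  have bE i : b 0 i = \sum_j u2 0 j * ((i == ord0)%:R - (i == lift ord0 j)%:R).
    by rewrite /b mxE; apply: eq_bigr => j _; rewrite /Wk !mxE.
  have sb : \sum_i b 0 i = 0.
    under eq_bigr do rewrite bE.
    rewrite exchange_big /= big1 // => j _.
    by rewrite -mulr_sumr sumrB !sum_delta1 subrr mulr0.
  have t1 : (b *m dlsubmx H *m a^t*) 0 0 = 0.
    suff -> : b *m dlsubmx H = 0 by rewrite mul0mx mxE.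
    apply/rowP => i; rewrite !mxE.
    under eq_bigr => j _ do rewrite dlE (hr i j ord0).
    by rewrite -mulr_suml sb mul0r.
  have t2 : (a *m ursubmx H *m b^t*) 0 0 = 0.
    rewrite -mulmxA; suff -> : ursubmx H *m b^t* = 0 by rewrite mulmx0 mxE.
    have ctE j : (b^t*) j 0 = (b 0 j)^* by rewrite !mxE.
    apply/colP => i; rewrite [in RHS]mxE mxE.
    under eq_bigr => j _ do rewrite urE ctE (hl i j ord0).
    by rewrite -mulr_sumr -rmorph_sum sb rmorph0 mulr0.
  have bdr j : (b *m drsubmx H) 0 j = - (c * b 0 j).
    rewrite mxE; under eq_bigr => j0 _ do rewrite drE hrr.
    rewrite (bigD1 j) //= eqxx mulr0 add0r.
    rewrite (eq_bigr (fun j0 => b 0 j0 * c)) => [|j0 /negbTE ->] //.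
    rewrite -mulr_suml.
    have := sb; rewrite (bigD1 j) //= => /eqP; rewrite addrC addr_eq0 => /eqP ->.
    by rewrite mulNr mulrC.
  have t3 : form b (drsubmx H) = - (c * \sum_j b 0 j * (b 0 j)^*).
    rewrite /form mxE mulr_sumr -sumrN; apply: eq_bigr => j _.
    by rewrite bdr !mxE mulNr mulrA.
  have sge : 0 <= \sum_j b 0 j * (b 0 j)^* by apply: sumr_ge0 => j _; exact: mul_conjC_ge0.
  rewrite form_block t1 t2 t3 addr0 add0r.
  case: (eqVneq u1 0) => u1z.
    rewrite /a u1z mul0mx form0 add0r oppr_lt0 mulr_gt0 //.
    have u2n0 : u2 != 0.
      by apply: contraNneq un0 => u2z; rewrite -(hsubmxK u) -/u1 -/u2 u1z u2z row_mx0.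
    have [j0 hj0] := rV_nz u2n0.
    have bj0 : b 0 (lift ord0 j0) = - u2 0 j0.
      rewrite bE [lift _ _ == ord0]eq_sym (negbTE (neq_lift _ _)) /=.
      under eq_bigr => j _ do rewrite sub0r (inj_eq (@lift_inj _ ord0)) eq_sym mulrN.
      by rewrite sumrN sum_delta.
    rewrite (bigD1 (lift ord0 j0)) //=.
    have s' : 0 <= \sum_(j | j != lift ord0 j0) b 0 j * (b 0 j)^*.
      by apply: sumr_ge0 => j _; exact: mul_conjC_ge0.
    have p : 0 < b 0 (lift ord0 j0) * (b 0 (lift ord0 j0))^*.
      by rewrite mul_conjC_gt0 bj0 oppr_eq0.
    by have := ltr_leD p s'; rewrite addr0.
  have ha := hU' u1 u1z.
  have hc : - (c * \sum_j b 0 j * (b 0 j)^*) <= 0.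
    by rewrite oppr_le0 mulr_ge0 // ltW.
  by have := ltr_leD ha hc; rewrite addr0.
have [U hU] := neg_sub_exists hH.
set U1 := lsubmx U; set U2 := rsubmx U.
set K := row_base (kermx U2).
have le1 : (\rank (kermx U2) <= Nneg (ulsubmx H))%N.
  apply: (neg_sub_le (U := K *m U1)) => // v vn0.
  have un0 : v *m K != 0 by rewrite mulmx_free_eq0 ?row_base_free.
  have uU2 : v *m K *m U2 = 0.
    by apply/sub_kermxP; apply: submx_trans (submxMl _ _) _; rewrite eq_row_base.
  have eU : U = row_mx U1 U2 by rewrite hsubmxK.
  have := hU _ un0; rewrite [in X in form X _]eU mul_mx_row uU2 form_block.
  by rewrite !mul0mx ct0 !mulmx0 ?mxE form0 !addr0 (mulmxA v K U1).
have := rank_leq_col U2; rewrite mxrank_ker in le1; lia.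
Qed.

End PartA.

Lemma char_poly_similar (F : fieldType) n (P D : 'M[F]_n) : P \in unitmx ->
  char_poly (invmx P *m D *m P) = char_poly D.
Proof.
move=> Pu; rewrite /char_poly.
set Q := map_mx polyC P; set Qi := map_mx polyC (invmx P).
have QQ : Qi *m Q = 1%:M by rewrite -map_mxM mulVmx // map_mx1.
have -> : char_poly_mx (invmx P *m D *m P) = Qi *m char_poly_mx D *m Q.
  rewrite /char_poly_mx mulmxBr mulmxBl !map_mxM -/Q -/Qi.
  by rewrite scalar_mxC -(mulmxA _ Qi Q) QQ mulmx1.
by rewrite !det_mulmx mulrAC -det_mulmx QQ det1 mul1r.
Qed.

Lemma count_undup_sum (T : eqType) (s : seq T) (P : pred T) :
  (\sum_(x <- undup s | P x) count_mem x s)%N = count P s.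
Proof.
have := big_undup_iterop_count addn s P (fun _ => 1%N).
rewrite sum1_count => <-; apply: eq_bigr => x _.
by case: (count_mem x s) => [|c] //=; elim: c => [//|c IH]; rewrite /= -IH add1n.
Qed.

Lemma neg_inertia_C (R : rcfType) N (A : 'M[R]_N) :
  map_mx (real_complex R) A \is hermsymmx ->
  neg_inertia A = Nneg (map_mx (real_complex R) A).
Proof.
set H := map_mx _ A => Hh.
have /hermitian_normalmx /orthomx_spectralP HE := Hh.
set P := spectralmx H in HE; set d := spectral_diag H in HE.
pose r i := complex.Re (d 0 i).
have dr i : d 0 i = (r i)%:C%C by rewrite /r RRe_real //; exact: spec_real.
pose s := [seq r i | i <- index_enum 'I_N].
have cA : char_poly A = \prod_(x <- s) ('X - x%:P).
  apply: (@map_poly_inj _ _ (real_complex R)).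
  rewrite map_char_poly -/H HE char_poly_similar; last exact/unitarymx_unit/spectral_unitarymx.
  rewrite char_poly_trig ?diag_mx_is_trig // map_prod_XsubC big_map.
  by apply: eq_bigr => i _; rewrite mxE eqxx mulr1n dr.
have p0 : \prod_(x <- s) ('X - x%:P) != 0 by rewrite monic_neq0 // monic_prod_XsubC.
rewrite /neg_inertia cA.
rewrite (perm_big (undup s)); last first.
  apply: uniq_perm; rewrite ?undup_uniq ?uniq_roots // => x.
  by rewrite mem_undup -(roots_on_rootsR p0 x) root_prod_XsubC in_itv.
under eq_bigr do rewrite mu_prod_XsubC.
rewrite count_undup_sum /Nneg cardsE -sum1_card -sum1_count big_map.
by apply: eq_bigl => i; rewrite unfold_in /=; change ((r i < 0) = (d 0 i < 0)); rewrite dr ltcE /= eqxx.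
Qed.

Lemma herm_dist (R : rcfType) N (E : rel 'I_N) : symmetric E ->
  map_mx (real_complex R) (dist_sq_mx R E) \is hermsymmx.
Proof.
move=> sE; apply/is_hermitianmxP; rewrite expr0 scale1r; apply/matrixP => i j.
by rewrite !mxE (gdist_sym _ _ sE) conj_Creal // complex_real.
Qed.

Unset Implicit Arguments.

Theorem corollary3p2 (R : realType) (n k : nat) (e : rel 'I_n) (w : 'I_n) :
  simple_graph e -> connected_graph e -> (2 <= k)%N ->
  let Delta := dist_sq_mx R (add_pendants e w k) in
  let Delta' := dist_sq_mx R e in
  neg_inertia Delta = (k - 1 + neg_inertia Delta')%N \/
  neg_inertia Delta = (k + neg_inertia Delta')%N.
Proof.
move=> [sE _] cg; case: k => [|[|k']] // _ Delta Delta'.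
have sG := G_sym (k:=k'.+2) w sE.
set H := map_mx (real_complex R) Delta.
have hH : H \is hermsymmx by apply: herm_dist.
have hH' : ulsubmx H = map_mx (real_complex R) Delta'.
  by apply/matrixP => i j; rewrite !mxE gdist_ll.
have hl i j j' : H (lshift _ i) (rshift n j) = H (lshift _ i) (rshift n j').
  by rewrite !mxE (gdist_lr _ _ _ j j').
have hr i j j' : H (rshift n j) (lshift _ i) = H (rshift n j') (lshift _ i).
  by rewrite !mxE !(gdist_sym (rshift n _) (lshift _ i) sG) (gdist_lr _ _ _ j j').
have hrr j j' : H (rshift n j) (rshift n j') = if j == j' then 0 else 4%:R.
  rewrite !mxE; case: eqVneq => [->|jj]; first by rewrite gdist_refl rmorph0.
  by rewrite gdist_rr // rmorph_nat.
have hH2 : ulsubmx H \is hermsymmx by rewrite hH'; apply: herm_dist.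
have c0 : (0 : complex R) < 4%:R by rewrite ltr0n.
have [lo hi] := inertia_pendant hH hH2 c0 hl hr hrr.
rewrite (neg_inertia_C hH) (neg_inertia_C (A := Delta')); last by apply: herm_dist.
rewrite -hH'.
move: lo hi; rewrite -/H; set a := Nneg H; set b := Nneg (ulsubmx H); lia.
Qed.
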